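(* Let $\Omega_0\subseteq\mathbb{R}^{p+1}$ be a domain and $A_0,A_1\in C^{\omega}(\Omega_0,\mathbb{A})$. Then $$GCK[A_0]=HGCK[A_0,0]+\frac1q\,HGCK[0,D_{\mathbf{x}_p}A_0],$$ and $$HGCK[A_0,A_1]=\mathcal{PE}\big[GCK[A_0]\big]+q\,\mathcal{PO}\big[GCK[f_0]\big],$$ where $f_0\in C^\omega(\Omega_0,\mathbb{A})$ is a solution of $D_{\mathbf{x}_p}f_0=A_1$, if it exists (identities holding where all terms are defined).
   Context: Let $\mathbb{A}$ be a real alternative algebra (the associator $[a,b,c]=(ab)c-a(bc)$ is an alternating trilinear function) with unity $1$, of finite real dimension $d>1$, equipped with an anti-involution $a\mapsto a^c$ (real linear, $a^c=a$ for real $a$, $(a^c)^c=a$, $(ab)^c=b^ca^c$). Let $t(x)=x+x^c$, $n(x)=xx^c$, $\mathbb{S}_{\mathbb{A}}=\{x: t(x)=0,\ n(x)=1\}$ (assumed nonempty) and $Q_{\mathbb{A}}=\mathbb{R}\cup\{x: t(x)\in\mathbb{R},\ n(x)\in\mathbb{R},\ 4n(x)>t(x)^2\}$. Let $M$ be a real subspace with $\mathbb{R}\subsetneq M\subseteq Q_{\mathbb{A}}$ having a basis $(v_0,\dots,v_m)$, $m\ge1$, $v_0=1$, $v_s\in\mathbb{S}_{\mathbb{A}}$, $v_sv_t=-v_tv_s$ for distinct $s,t\ge1$; complete it to a basis of $\mathbb{A}$ with associated Euclidean norm. Identify $x=\sum x_sv_s\in M$ with $(x_0,\dots,x_m)\in\mathbb{R}^{m+1}$;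 differentiate componentwise; $C^\omega$ = componentwise real analytic. Fix $p\in\{0,\dots,m-1\}$, $q=m-p$; $\mathbf{x}=\mathbf{x}_p+\underline{\mathbf{x}}_q$ with $\mathbf{x}_p=\sum_{s=0}^px_sv_s\in\mathbb{R}^{p+1}$, $\underline{\mathbf{x}}_q=\sum_{s=p+1}^m x_sv_s$; $r=|\underline{\mathbf{x}}_q|$. $D_{\mathbf{x}_p}f=\sum_{s=0}^p v_s\partial_{x_s}f$, $\Delta_{\mathbf{x}_p}=\sum_{s=0}^p\partial_{x_s}^2$. With $\mathbf{x}_\diamond=\mathbf{x}_p-\underline{\mathbf{x}}_q$: $\mathcal{PE}[h](\mathbf{x})=\frac12(h(\mathbf{x})+h(\mathbf{x}_\diamond))$, $\mathcal{PO}[h](\mathbf{x})=\frac12(h(\mathbf{x})-h(\mathbf{x}_\diamond))$. The monogenic generalized CK-extension of real analytic $g$ on $\Omega_0$ is $GCK[g](\mathbf{x})=\sum_{k\ge0}\frac{\Gamma(\frac q2)(-1)^kr^{2k}}{2^{2k}k!\Gamma(k+\frac q2)}\Delta_{\mathbf{x}_p}^kg(\mathbf{x}_p)+\underline{\mathbf{x}}_q\sum_{k\ge0}\frac{\Gamma(\frac q2)(-1)^kr^{2k}}{2^{2k+1}k!\Gamma(k+\frac q2+1)}\Delta_{\mathbf{x}_p}^k(D_{\mathbf{x}_p}g(\mathbf{x}_p))$, the unique function of the form $\sum_k\underline{\mathbf{x}}_q^kA_k(\mathbf{x}_p)$ ($A_k$ real analytic, $A_0=g$) which is monogenic ($\sum_{s=0}^mv_s\partial_{x_s}f=0$)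 on a p-symmetric neighbourhood of $\Omega_0$; the harmonic generalized CK-extension of $(A_0,A_1)$ is $HGCK[A_0,A_1](\mathbf{x})=\sum_{k\ge0}\frac{\Gamma(\frac q2)(-1)^kr^{2k}}{2^{2k}k!\Gamma(k+\frac q2)}\Delta_{\mathbf{x}_p}^kA_0(\mathbf{x}_p)+\underline{\mathbf{x}}_q\sum_{k\ge0}\frac{\Gamma(\frac q2+1)(-1)^kr^{2k}}{2^{2k}k!\Gamma(k+\frac q2+1)}\Delta_{\mathbf{x}_p}^kA_1(\mathbf{x}_p)$, the unique function of the form $\sum_k\underline{\mathbf{x}}_q^kA_k(\mathbf{x}_p)$ with the given $A_0,A_1$ which is harmonic there. *)

(* Defs.v *)
From HB Require Import structures.
From mathcomp Require Import all_boot all_order all_algebra.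
From mathcomp Require Import all_classical all_reals all_analysis.
Set Implicit Arguments. Unset Strict Implicit. Unset Printing Implicit Defensive.
Import Order.TTheory GRing.Theory Num.Theory.
Import numFieldNormedType.Exports.
Local Open Scope classical_set_scope.
Local Open Scope ring_scope.

(* ---------- The real algebra A, modelled as R^d with coordinates in a fixed
   basis, with product [mul], unity [one] and anti-involution [conj]. ---------- *)
Section Algebra.
Variables (R : realType) (d : nat).
Local Notation A := 'rV[R]_d.
Variables (mul : A -> A -> A) (one : A) (conj : A -> A).

Definition associator (a b c : A) : A := mul (mul a b) c - mul a (mul b c).

Definition alt_algebra : Prop :=
  [/\ (forall (k : R) a b c, mul (k *: a + b) c = k *: mul a c + mul b c),
      (forall (k : R) a b c, mul a (k *: b + c) = k *: mul a b + mul a c),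
      (forall a, mul one a = a /\ mul a one = a) &
      (forall a b, [/\ associator a a b = 0, associator a b a = 0 &
                       associator b a a = 0])].

Definition is_real_elt (x : A) : Prop := exists c : R, x = c *: one.

Definition anti_involution : Prop :=
  [/\ (forall (k : R) a b, conj (k *: a + b) = k *: conj a + conj b),
      (forall c : R, conj (c *: one) = c *: one),
      (forall a, conj (conj a) = a) &
      (forall a b, conj (mul a b) = mul (conj b) (conj a))].

Definition trc (x : A) : A := x + conj x.
Definition nrm (x : A) : A := mul x (conj x).

Definition in_SA (x : A) : Prop := trc x = 0 /\ nrm x = one.

Definition in_QA (x : A) : Prop :=
  is_real_elt x \/
  exists t n : R, [/\ trc x = t *: one, nrm x = n *: one & t ^+ 2 < 4 * n].

Definition lin_indep (m : nat) (v : 'I_m -> A) : Prop :=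
  forall c : 'I_m -> R, \sum_(s < m) c s *: v s = 0 -> forall s, c s = 0.
End Algebra.

(* ---------- Euler--Gauss limit definition of the Gamma function (z > 0):
   Gamma z = lim_n n! n^z / (z (z+1) ... (z+n)). ---------- *)
Definition Gamma (R : realType) (z : R) : R :=
  limn (fun n : nat => n`!%:R * (n%:R `^ z) / \prod_(j < n.+1) (z + j%:R)).

Section Analytic.
Variables (R : realType).

(* homogeneous part of degree N of the power series with coefficients c at h *)
Definition homog_part (n N : nat) (c : ('I_n -> nat) -> R) (h : 'rV[R]_n) : R :=
  \sum_(a : {ffun 'I_n -> 'I_N.+1} | (\sum_i (a i : nat) == N)%N)
     c (fun i => (a i : nat)) * \prod_i h ord0 i ^+ a i.

Definition ranalytic_at (n : nat) (g : 'rV[R]_n -> R) (x0 : 'rV[R]_n) : Prop :=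
  exists (c : ('I_n -> nat) -> R) (rho : R), 0 < rho /\
    forall h : 'rV[R]_n, `|h| < rho ->
      cvgn (series (fun N => homog_part N (fun a => `|c a|) (map_mx Num.norm h)))
      /\ g (x0 + h) = limn (series (fun N => homog_part N c h)).

(* C^omega(Omega, A): componentwise real analytic on Omega *)
Definition analytic_on (n d : nat) (Omega : set 'rV[R]_n) (f : 'rV[R]_n -> 'rV[R]_d)
  : Prop :=
  forall x0, Omega x0 -> forall i : 'I_d, ranalytic_at (fun x => f x ord0 i) x0.

Definition domain (n : nat) (Omega : set 'rV[R]_n) : Prop :=
  [/\ Omega !=set0, open Omega & connected Omega].
End Analytic.

Section CK.
Variables (R : realType) (d m p : nat).
Local Notation A := 'rV[R]_d.
Variables (mul : A -> A -> A) (v : 'I_m.+1 -> A).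
(* points x = x_p + underline x_q of R^{m+1} are given as pairs (xp, y) with
   xp in R^{p+1} (coordinates x_0..x_p) and y in R^q (coordinates
   x_{p+1}..x_m), q = m - p *)
Local Notation q := (m - p)%N.

Definition qR : R := q%:R.

(* underline x_q = sum_{s=p+1}^m x_s v_s *)
Definition xq (y : 'rV[R]_q) : A := \sum_(j < q) y ord0 j *: v (inord (p.+1 + j)).

(* r = |underline x_q| (Euclidean norm associated with the basis) *)
Definition rad (y : 'rV[R]_q) : R := Num.sqrt (\sum_(j < q) y ord0 j ^+ 2).

Definition part (s : 'I_p.+1) (f : 'rV[R]_p.+1 -> A) : 'rV[R]_p.+1 -> A :=
  'D_(delta_mx ord0 s) f.

Definition Dxp (f : 'rV[R]_p.+1 -> A) : 'rV[R]_p.+1 -> A :=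
  fun x => \sum_(s < p.+1) mul (v (inord s)) (part s f x).

Definition lap (f : 'rV[R]_p.+1 -> A) : 'rV[R]_p.+1 -> A :=
  fun x => \sum_(s < p.+1) part s (part s f) x.

Definition coef_even (k : nat) (r : R) : R :=
  Gamma (qR / 2) * (-1) ^+ k * r ^+ (2 * k) /
  (2 ^+ (2 * k) * k`!%:R * Gamma (k%:R + qR / 2)).
Definition coef_odd (k : nat) (r : R) : R :=
  Gamma (qR / 2) * (-1) ^+ k * r ^+ (2 * k) /
  (2 ^+ (2 * k + 1) * k`!%:R * Gamma (k%:R + qR / 2 + 1)).
Definition coef_hodd (k : nat) (r : R) : R :=
  Gamma (qR / 2 + 1) * (-1) ^+ k * r ^+ (2 * k) /
  (2 ^+ (2 * k) * k`!%:R * Gamma (k%:R + qR / 2 + 1)).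

Definition ser_even (g : 'rV[R]_p.+1 -> A) xp y :=
  series (fun k => coef_even k (rad y) *: iter k lap g xp).
Definition ser_odd (g : 'rV[R]_p.+1 -> A) xp y :=
  series (fun k => coef_odd k (rad y) *: iter k lap (Dxp g) xp).
Definition ser_hodd (A1 : 'rV[R]_p.+1 -> A) xp y :=
  series (fun k => coef_hodd k (rad y) *: iter k lap A1 xp).

Definition GCK (g : 'rV[R]_p.+1 -> A) xp y : A :=
  limn (ser_even g xp y) + mul (xq y) (limn (ser_odd g xp y)).
Definition GCK_def (g : 'rV[R]_p.+1 -> A) xp y : Prop :=
  cvgn (ser_even g xp y) /\ cvgn (ser_odd g xp y).

Definition HGCK (A0 A1 : 'rV[R]_p.+1 -> A) xp y : A :=
  limn (ser_even A0 xp y) + mul (xq y) (limn (ser_hodd A1 xp y)).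
Definition HGCK_def (A0 A1 : 'rV[R]_p.+1 -> A) xp y : Prop :=
  cvgn (ser_even A0 xp y) /\ cvgn (ser_hodd A1 xp y).

(* x_diamond = x_p - underline x_q corresponds to (xp, -y) *)
Definition PE (h : 'rV[R]_p.+1 -> 'rV[R]_q -> A) xp y : A :=
  2^-1 *: (h xp y + h xp (- y)).
Definition PO (h : 'rV[R]_p.+1 -> 'rV[R]_q -> A) xp y : A :=
  2^-1 *: (h xp y - h xp (- y)).
End CK.

(* Main.v *)
Require Import Defs.
From HB Require Import structures.
From mathcomp Require Import all_boot all_order all_algebra.
From mathcomp Require Import all_classical all_reals all_analysis.
From mathcomp Require Import ring lra.
Import Order.TTheory GRing.Theory Num.Theory.
Import numFieldNormedType.Exports.
Local Open Scope classical_set_scope.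
Local Open Scope ring_scope.
Set Implicit Arguments. Unset Strict Implicit.
Lemma natdiv_cvg1 (R : realType) (c : R) : 0 < c ->
  (n%:R / (c + n%:R)) @[n --> \oo] --> (1:R).
Proof.
move=> c0.
apply: (@squeeze_cvgr _ _ _ _ (fun n => 1 - (c+1) * harmonic n) (fun=> 1)).
- apply: nearW => n /=.
  have hp : 0 < c + n%:R by rewrite ltr_wpDr.
  have hn : 0 < n.+1%:R :> R by [].
  apply/andP; split.
    have -> : n%:R / (c + n%:R) = 1 - c / (c + n%:R) by field; rewrite gt_eqF.
    rewrite lerD2l lerN2 ler_pdivrMr // mulrAC ler_pdivlMr //.
    rewrite -natr1; have := ler0n R n; nra.
  by rewrite ler_pdivrMr // mul1r lerDr ltW.
- rewrite -[X in _ --> X](subr0 (1:R)) -[X in _ - X](mulr0 (c+1)).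
  apply: cvgB; first exact: cvg_cst.
  apply: cvgMl_tmp; exact: cvg_harmonic.
- exact: cvg_cst.
Qed.

Definition GS (R : realType) (z : R) (n : nat) : R :=
  n`!%:R * (n%:R `^ z) / \prod_(j < n.+1) (z + j%:R).

Lemma GS_prod_gt0 (R : realType) (z : R) n : 0 < z -> 0 < \prod_(j < n.+1) (z + j%:R).
Proof. by move=> z0; apply: prodr_gt0 => j _; rewrite ltr_wpDr. Qed.

Lemma GS_shift (R : realType) (z : R) n : 0 < z ->
  GS (z + 1) n = z * GS z n * (n%:R / (z + 1 + n%:R)).
Proof.
move=> z0.
have P1 : forall k, \prod_(j < k.+1) (z + 1 + j%:R) * z =
   \prod_(j < k.+1) (z + j%:R) * (z + 1 + k%:R).
  elim=> [|k IH]; first by rewrite !big_ord1 /=; ring.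
  rewrite big_ord_recr /= [in RHS]big_ord_recr /= mulrAC IH -natr1; ring.
have hP := GS_prod_gt0 n z0.
have hQ := GS_prod_gt0 n (ltr_wpDr ler01 z0 : 0 < z + 1).
have hn : 0 < z + 1 + n%:R by rewrite ltr_wpDr // ltr_wpDr.
rewrite /GS powRD; last by rewrite implybE gt_eqF ?ltr_wpDr.
rewrite powRr1 //.
have -> : \prod_(j < n.+1) (z + 1 + j%:R) =
   \prod_(j < n.+1) (z + j%:R) * (z + 1 + n%:R) / z.
  by rewrite -P1 mulfK // gt_eqF.
field; rewrite !gt_eqF //.
Qed.

Lemma GS_cvg_shift (R : realType) (z L : R) : 0 < z ->
  GS z @ \oo --> L -> GS (z + 1) @ \oo --> z * L.
Proof.
move=> z0 h.
have -> : GS (z + 1) = fun n => z * GS z n * (n%:R / (z + 1 + n%:R)).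
  by apply: funext => n; rewrite GS_shift.
rewrite -[X in _ --> X]mulr1.
apply: cvgM; first by apply: cvgMl_tmp.
by apply: natdiv_cvg1; rewrite ltr_wpDr.
Qed.

Lemma GS1_cvg (R : realType) : GS (1:R) @ \oo --> (1:R).
Proof.
have -> : GS (1:R) = fun n => n%:R / (1 + n%:R).
  apply: funext => n; rewrite /GS powRr1 //.
  have -> : \prod_(j < n.+1) (1 + j%:R) = n.+1`!%:R :> R.
    elim: n => [|k IH]; first by rewrite big_ord1 /= addr0.
    by rewrite big_ord_recr /= IH (factS k.+1) natrM mulrC -[k.+2]add1n natrD.
  rewrite factS natrM -[n.+1]add1n natrD; field.
  by rewrite !gt_eqF // ?ltr0n ?fact_gt0 // ltr_wpDr.
exact: natdiv_cvg1.
Qed.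

Lemma GS12_cvg (R : realType) : cvgn (GS (2^-1 : R)).
Proof.
set z : R := 2^-1.
have z0 : 0 < z by rewrite invr_gt0.
pose c n := (n`!%:R) ^+ 2 * n.+1%:R / (\prod_(j < n.+1) (z + j%:R)) ^+ 2 : R.
have c0 : forall n, 0 <= c n.
  move=> n; apply: divr_ge0; last by rewrite sqr_ge0.
  by rewrite mulr_ge0 // sqr_ge0.
have cdec : nonincreasing_seq c.
  apply/nonincreasing_seqP => n.
  have hP := GS_prod_gt0 n z0.
  have -> : c n.+1 = c n * ((n.+1%:R * n.+2%:R) / (z + n.+1%:R) ^+ 2).
    rewrite /c big_ord_recr /= factS natrM; field.
    by rewrite !gt_eqF // ltr_wpDr.
  apply: ler_piMr => //; rewrite ler_pdivrMr ?exprn_gt0 ?ltr_wpDr // mul1r.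
  rewrite /z; set h := (2:R)^-1; set x : R := n%:R.
  have e : 2 * h * (x + 1) = x + 1 by rewrite /h divff ?mul1r // pnatr_eq0.
  rewrite -!natr1 -/x; have := sqr_ge0 h; nra.
have /cvg_ex [l cl] : cvgn c.
  apply: nonincreasing_is_cvgn => //.
  by exists 0 => _ [n _ <-].
have -> : GS z = Num.sqrt \o (fun n => c n * (n%:R / (1 + n%:R))).
  apply: funext => n /=.
  have hP := GS_prod_gt0 n z0.
  have hG : 0 <= GS z n.
    by rewrite /GS divr_ge0 ?mulr_ge0 ?powR_ge0 // ltW.
  rewrite -[LHS](ger0_norm hG) -sqrtr_sqr; congr Num.sqrt.
  rewrite /GS /c /z powR12_sqrt // exprMn exprMn sqr_sqrtr //; field.
  by rewrite !gt_eqF // ltr_wpDr.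
apply/cvg_ex; exists (Num.sqrt (l * 1)).
apply: continuous_cvg; first exact: sqrt_continuous.
by apply: cvgM => //; apply: natdiv_cvg1.
Qed.

Lemma GS_half_cvg (R : realType) k :
  cvgn (GS (k.+1%:R / 2 : R)) /\ cvgn (GS (k.+2%:R / 2 : R)).
Proof.
elim: k => [|k [IH1 IH2]].
  split; first by rewrite mul1r; exact: GS12_cvg.
  by rewrite divff ?pnatr_eq0 //; apply/cvg_ex; exists 1; exact: GS1_cvg.
split => //.
have -> : (k.+3%:R / 2 : R) = k.+1%:R / 2 + 1.
  rewrite -[k.+3]addn2 natrD mulrDl divff ?pnatr_eq0 //.
move/cvg_ex: IH1 => [l hl]; apply/cvg_ex; exists (k.+1%:R / 2 * l).
by apply: GS_cvg_shift; rewrite ?divr_gt0.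
Qed.

Lemma Gamma_shift (R : realType) (q : nat) : (0 < q)%N ->
  Gamma (q%:R / 2 + 1 : R) = q%:R / 2 * Gamma (q%:R / 2).
Proof.
case: q => // k _.
have [/cvg_ex [l hl] _] := GS_half_cvg R k.
have hk : 0 < k.+1%:R / 2 :> R by rewrite divr_gt0.
have hl' := GS_cvg_shift hk hl.
rewrite /Gamma -/(GS _) -/(GS _).
have h2 := cvg_lim (@Rhausdorff R) hl'.
by rewrite (cvg_lim (@Rhausdorff R) hl) h2.
Qed.

Section Aux.
Variables (R : realType) (d : nat) (mul : 'rV[R]_d -> 'rV[R]_d -> 'rV[R]_d) (one : 'rV[R]_d).
Hypothesis Halg : alt_algebra mul one.

Lemma mul0r' a : mul a 0 = 0.
Proof.
case: Halg => _ Hr _ _.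
have H := Hr 1 a 0 0; rewrite !scale1r addr0 in H.
by apply: (@addrI _ (mul a 0)); rewrite addr0 -H.
Qed.
Lemma mulr0' b : mul 0 b = 0.
Proof.
case: Halg => Hl _ _ _.
have H := Hl 1 0 0 b; rewrite !scale1r addr0 in H.
by apply: (@addrI _ (mul 0 b)); rewrite addr0 -H.
Qed.
Lemma mulZr' a (c : R) b : mul a (c *: b) = c *: mul a b.
Proof. case: Halg => _ Hr _ _. by have := Hr c a b 0; rewrite !addr0 mul0r' addr0. Qed.
Lemma mulNl' a b : mul (- a) b = - mul a b.
Proof.
case: Halg => Hl _ _ _.
by have := Hl (-1) a 0 b; rewrite addr0 mulr0' addr0 !scaleN1r.
Qed.
End Aux.

Lemma D_local (R : realType) (n d : nat) (U : set 'rV[R]_n) (f g : 'rV[R]_n -> 'rV[R]_d) w :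
  open U -> (forall x, U x -> f x = g x) -> forall x, U x -> 'D_w f x = 'D_w g x.
Proof.
move=> oU fg x Ux; apply: near_eq_derive.
apply: (filterS _ (open_nbhs_nbhs (conj oU Ux))) => z Uz; exact: fg.
Qed.

Lemma lap_local (R : realType) (d p : nat) (U : set 'rV[R]_p.+1) (f g : 'rV[R]_p.+1 -> 'rV[R]_d) :
  open U -> (forall x, U x -> f x = g x) -> forall x, U x -> lap f x = lap g x.
Proof.
move=> oU fg x Ux; rewrite /lap; apply: eq_bigr => s _.
rewrite /part; apply: (@D_local R p.+1 d U _ _ _ oU _ x Ux) => z Uz.
exact: (D_local _ oU fg Uz).
Qed.

Lemma iter_lap_local (R : realType) (d p : nat) (U : set 'rV[R]_p.+1) (f g : 'rV[R]_p.+1 -> 'rV[R]_d) :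
  open U -> (forall x, U x -> f x = g x) -> forall k x, U x -> iter k (@lap R d p) f x = iter k (@lap R d p) g x.
Proof.
move=> oU fg; elim=> [|k IH] x Ux; first exact: fg.
rewrite !iterS; exact: (lap_local oU IH Ux).
Qed.

Lemma iter_lap0 (R : realType) (d p : nat) k :
  iter k (@lap R d p) (fun=> 0) = fun=> 0.
Proof.
elim: k => [|k IH] //; rewrite iterS IH.
have P0 : forall s, part s (fun _ : 'rV[R]_p.+1 => (0 : 'rV[R]_d)) = fun=> 0.
  by move=> s; apply: funext => x; rewrite /part derive_cst.
by apply: funext => x; rewrite /lap; apply: big1 => s _; rewrite !P0.
Qed.

Lemma limn_series0 (R : realType) (d : nat) (c : nat -> R) :
  limn (series (fun k => c k *: (0 : 'rV[R]_d))) = 0.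
Proof.
have -> : series (fun k => c k *: (0 : 'rV[R]_d)) = fun=> 0.
  by apply: funext => n; rewrite /series /=; apply: big1 => k _; rewrite scaler0.
exact: lim_cst.
Qed.
Lemma limn_series_iter0 (R : realType) (d p : nat) (c : nat -> R) xp :
  limn (series (fun k => c k *: iter k (@lap R d p) (fun=> 0) xp)) = 0.
Proof.
rewrite (_ : (fun k => c k *: iter k (@lap R d p) (fun=> 0) xp) = fun k => c k *: 0).
  exact: limn_series0.
by apply: funext => k; rewrite iter_lap0.
Qed.

Unset Implicit Arguments.

Theorem corollary3p17 (R : realType) (d m p : nat)
  (mul : 'rV[R]_d -> 'rV[R]_d -> 'rV[R]_d) (one : 'rV[R]_d)
  (conj : 'rV[R]_d -> 'rV[R]_d) (v : 'I_m.+1 -> 'rV[R]_d)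
  (Omega0 : set 'rV[R]_p.+1) (A0 A1 : 'rV[R]_p.+1 -> 'rV[R]_d) :
  (* A: real alternative algebra with unity, dimension d > 1, anti-involution *)
  alt_algebra mul one -> (1 < d)%N -> anti_involution mul one conj ->
  (exists x, in_SA mul one conj x) ->
  (* M = span(v_0, ..., v_m), m >= 1, R strictly inside M, M inside Q_A *)
  (1 <= m)%N -> lin_indep v -> v ord0 = one ->
  (forall s, s != ord0 -> in_SA mul one conj (v s)) ->
  (forall s t, s != ord0 -> t != ord0 -> s != t ->
     mul (v s) (v t) = - mul (v t) (v s)) ->
  (forall c : 'I_m.+1 -> R, in_QA mul one conj (\sum_(s < m.+1) c s *: v s)) ->
  (* p in {0, ..., m-1}, q = m - p *)
  (p < m)%N ->
  domain Omega0 -> analytic_on Omega0 A0 -> analytic_on Omega0 A1 ->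
  (* GCK[A0] = HGCK[A0,0] + (1/q) HGCK[0, D_{x_p} A0] *)
  (forall xp (y : 'rV[R]_(m - p)), Omega0 xp ->
     GCK_def mul v A0 xp y ->
     HGCK_def A0 (fun=> 0) xp y ->
     HGCK_def (fun=> 0) (Dxp mul v A0) xp y ->
     GCK mul v A0 xp y =
       HGCK mul v A0 (fun=> 0) xp y
       + (qR R m p)^-1 *: HGCK mul v (fun=> 0) (Dxp mul v A0) xp y)
  /\
  (* HGCK[A0,A1] = PE[GCK[A0]] + q PO[GCK[f0]] for analytic f0 with D f0 = A1 *)
  (forall f0 : 'rV[R]_p.+1 -> 'rV[R]_d,
     analytic_on Omega0 f0 ->
     (forall xp, Omega0 xp -> Dxp mul v f0 xp = A1 xp) ->
     forall xp (y : 'rV[R]_(m - p)), Omega0 xp ->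
       HGCK_def A0 A1 xp y ->
       GCK_def mul v A0 xp y -> GCK_def mul v A0 xp (- y) ->
       GCK_def mul v f0 xp y -> GCK_def mul v f0 xp (- y) ->
       HGCK mul v A0 A1 xp y =
         PE (GCK mul v A0) xp y + qR R m p *: PO (GCK mul v f0) xp y).
Proof.
move=> Halg _ _ _ _ _ _ _ _ _ hpm [_ oU _] _ _.
have q0 : (0 < m - p)%N by rewrite subn_gt0.
set q := qR R m p.
have qn0 : q != 0 by rewrite /q /qR pnatr_eq0 -lt0n.
have hG : Gamma (q / 2 + 1) = q / 2 * Gamma (q / 2) by exact: Gamma_shift.
have coefE : forall k (r : R), coef_odd m p k r = q^-1 * coef_hodd m p k r.
  move=> k r; rewrite /coef_odd /coef_hodd -/q hG.
  rewrite addn1 exprS !invfM.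
  set a := (Gamma _)^-1; set b := (k`!%:R)^-1; set c := (2 ^+ (2 * k))^-1.
  by clearbody a b c; field.
have m0 := mul0r' Halg.
have mZ := mulZr' Halg.
have mN := mulNl' Halg.
have radN : forall y : 'rV[R]_(m - p), Defs.rad (- y) = Defs.rad y.
  move=> y; rewrite /Defs.rad; congr Num.sqrt; apply: eq_bigr => j _.
  by rewrite mxE sqrrN.
have xqN : forall y : 'rV[R]_(m - p), xq v (- y) = - xq v y.
  move=> y; rewrite /xq -sumrN; apply: eq_bigr => j _.
  by rewrite mxE scaleNr.
have oddL : forall g xp (y : 'rV[R]_(m - p)), cvgn (ser_hodd (Dxp mul v g) xp y) ->
    limn (ser_odd mul v g xp y) = q^-1 *: limn (ser_hodd (Dxp mul v g) xp y).
  move=> g xp y h.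
  have -> : ser_odd mul v g xp y = series (q^-1 *: (fun k =>
      coef_hodd m p k (Defs.rad y) *: iter k (@lap R d p) (Dxp mul v g) xp)).
    rewrite /ser_odd; congr series; apply: funext => k /=; by rewrite coefE -scalerA.
  by rewrite seriesZ limZl_tmp.
have hlf1 : forall a b : 'rV[R]_d, 2^-1 *: ((a + b) + (a + - b)) = a.
  move=> a b; rewrite addrACA subrr addr0.
  have -> : a + a = (2:R) *: a by rewrite scaler_nat mulr2n.
  by rewrite scalerA mulVf ?scale1r // pnatr_eq0.
have hlf2 : forall a b : 'rV[R]_d, 2^-1 *: ((a + b) - (a + - b)) = b.
  move=> a b; rewrite opprD opprK addrACA subrr add0r.
  have -> : b + b = (2:R) *: b by rewrite scaler_nat mulr2n.
  by rewrite scalerA mulVf ?scale1r // pnatr_eq0.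
split.
  move=> xp y Ux [_ hO] _ [_ hH].
  rewrite /GCK /HGCK.
  rewrite (oddL A0 xp y hH).
  have Z1 : limn (ser_hodd (m:=m) (fun _ : 'rV[R]_p.+1 => (0:'rV[R]_d)) xp y) = 0.
    by rewrite /ser_hodd limn_series_iter0.
  have Z2 : limn (ser_even (m:=m) (fun _ : 'rV[R]_p.+1 => (0:'rV[R]_d)) xp y) = 0.
    by rewrite /ser_even limn_series_iter0.
  rewrite Z1 Z2 m0 addr0 add0r.
  congr (_ + _); exact: mZ.
move=> f0 _ hD xp y Ux [_ hH] _ _ _ _.
have loc : forall k, iter k (@lap R d p) (Dxp mul v f0) xp = iter k (@lap R d p) A1 xp.
  by move=> k; apply: (iter_lap_local oU hD k Ux).
have hodd_eq : ser_hodd (Dxp mul v f0) xp y = ser_hodd A1 xp y.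
  by rewrite /ser_hodd; congr series; apply: funext => k; rewrite loc.
have serNe : forall g, ser_even g xp (- y) = ser_even g xp y.
  by move=> g; rewrite /ser_even radN.
have serNo : forall g, ser_odd mul v g xp (- y) = ser_odd mul v g xp y.
  by move=> g; rewrite /ser_odd radN.
rewrite /PE /PO /GCK /HGCK.
rewrite !serNe.
rewrite !serNo.
rewrite xqN.
move: (limn (ser_odd mul v A0 xp y)) => O1.
move: (limn (ser_even A0 xp y)) => E1.
move: (limn (ser_even f0 xp y)) => E2.
rewrite (oddL f0 xp y) ?hodd_eq //.
move: (limn (ser_hodd A1 xp y)) => H.
move: (xq v y) => X.
rewrite !mN hlf1 hlf2 mZ scalerA mulfV ?scale1r //.
Qed.
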